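(* Let $R$ be a commutative ring, $S\subseteq R$ a subset, and $\eta:R\to S^{(-1)}R$ the canonical map. Then: (i) $\eta$ is an epimorphism in the category of commutative rings; (ii) the induced map $\eta^*:\mathrm{Spec}(S^{(-1)}R)\to\mathrm{Spec}(R)$, $\mathfrak q\mapsto\eta^{-1}(\mathfrak q)$, is bijective; (iii) for each $s\in S$, the set $(\eta^* )^{-1}(V(s))$ is both open and closed in $\mathrm{Spec}(S^{(-1)}R)$ with respect to the Zariski topology, and also with respect to the flat topology; (iv) $S^{(-1)}R$ is a nonzero ring if and only if $R$ is; (v) $\ker(\eta)$ is contained in the nilradical of $R$.
   Context: For $a,b$ in a commutative ring, $b$ is a pointwise inverse of $a$ if $a=a^2b$ and $b=b^2a$. For a subset $S\subseteq R$, $S^{(-1)}R=R[x_s:s\in S]/I$ where $I$ is generated by $sx_s^2-x_s$ and $s^2x_s-s$ ($s\in S$), and $\eta:R\to S^{(-1)}R$ is the canonical map. For a ring $A$ and $f\in A$, $V(f)=\{\mathfrak p\in\mathrm{Spec}(A): f\in\mathfrak p\}$, and for an ideal $I$, $V(I)=\{\mathfrak p: I\subseteq \mathfrak p\}$. The flat topology on $\mathrm{Spec}(A)$ is the topology having as a basis of open sets the sets $V(I)$ with $I$ ranging over finitely generated ideals of $A$ (this is Hochster's inverse topology). *)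

(* Defs.v *)
From HB Require Import structures.
From mathcomp Require Import all_boot all_order all_algebra.
Set Implicit Arguments. Unset Strict Implicit. Unset Printing Implicit Defensive.
Import Order.TTheory GRing.Theory Num.Theory.
Local Open Scope ring_scope.

Definition is_ideal (A : comPzRingType) (I : A -> Prop) : Prop :=
  [/\ I 0, (forall x y, I x -> I y -> I (x + y)) & (forall a x, I x -> I (a * x))].

Definition is_prime_ideal (A : comPzRingType) (P : A -> Prop) : Prop :=
  [/\ is_ideal P, ~ P 1 & (forall x y, P (x * y) -> P x \/ P y)].

Definition Spec (A : comPzRingType) : Type := {P : A -> Prop | is_prime_ideal P}.

Definition fg_ideal (A : comPzRingType) (l : seq A) : A -> Prop :=
  fun a => exists c : seq A, size c = size l /\
             a = \sum_(i < size l) c`_i * l`_i.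

Definition finitely_generated (A : comPzRingType) (I : A -> Prop) : Prop :=
  exists l : seq A, forall a, I a <-> fg_ideal l a.

Definition V (A : comPzRingType) (I : A -> Prop) : Spec A -> Prop :=
  fun p => forall a, I a -> sval p a.

Definition Vf (A : comPzRingType) (f : A) : Spec A -> Prop :=
  fun p => sval p f.

Definition zariski_closed (A : comPzRingType) (U : Spec A -> Prop) : Prop :=
  exists I : A -> Prop, is_ideal I /\ forall p, U p <-> V I p.

Definition zariski_open (A : comPzRingType) (U : Spec A -> Prop) : Prop :=
  zariski_closed (fun p => ~ U p).

(* Flat (inverse) topology: generated by the basis V(I), I finitely generated
   ideal; open sets are the unions of basic open sets. *)
Definition flat_open (A : comPzRingType) (U : Spec A -> Prop) : Prop :=
  forall p, U p -> exists I : A -> Prop,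
    [/\ is_ideal I, finitely_generated I, V I p & forall q, V I q -> U q].

Definition flat_closed (A : comPzRingType) (U : Spec A -> Prop) : Prop :=
  flat_open (fun p => ~ U p).

Lemma comap_prime (R A : comPzRingType) (f : {rmorphism R -> A})
  (P : A -> Prop) : is_prime_ideal P -> is_prime_ideal (fun r => P (f r)).
Proof.
case=> [[P0 PD PM] P1 Pp]; split; first split.
- by rewrite rmorph0.
- by move=> x y Hx Hy; rewrite rmorphD; apply: PD.
- by move=> a x Hx; rewrite rmorphM; apply: PM.
- by rewrite rmorph1.
- by move=> x y; rewrite rmorphM; apply: Pp.
Qed.

Definition comap (R A : comPzRingType) (f : {rmorphism R -> A})
  (q : Spec A) : Spec R :=
  exist _ (fun r => sval q (f r)) (comap_prime f (proj2_sig q)).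

(* (A, eta, x) is (a presentation of) S^(-1)R = R[x_s : s in S]/I, where I is
   generated by s x_s^2 - x_s and s^2 x_s - s: i.e. it satisfies the universal
   property of this quotient of the polynomial ring.  The variable x_s is the
   value x s (values of x outside S are irrelevant). *)
Definition is_pinv_localization (R : comPzRingType) (S : R -> Prop)
  (A : comPzRingType) (eta : {rmorphism R -> A}) (x : R -> A) : Prop :=
  (forall s, S s -> eta s * x s ^+ 2 - x s = 0 /\ eta s ^+ 2 * x s - eta s = 0) /\
  (forall (B : comPzRingType) (f : {rmorphism R -> B}) (y : R -> B),
     (forall s, S s -> f s * y s ^+ 2 - y s = 0 /\ f s ^+ 2 * y s - f s = 0) ->
     exists g : {rmorphism A -> B},
       ((forall r, g (eta r) = f r) /\ (forall s, S s -> g (x s) = y s)) /\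
       (forall g' : {rmorphism A -> B},
          (forall r, g' (eta r) = f r) -> (forall s, S s -> g' (x s) = y s) ->
          forall a, g' a = g a)).

(* Main.v *)
Require Import Defs.
From HB Require Import structures.
From mathcomp Require Import all_boot all_order all_algebra.
From mathcomp Require Import boolp classical_sets.
From mathcomp Require Import ring.
From Stdlib Require Classical_Prop.
Import Order.TTheory GRing.Theory Num.Theory.
Local Open Scope ring_scope.

Module FracP.
Local Open Scope quotient_scope.
Section FracP.
Variables (R : comPzRingType) (P : R -> Prop) (HP : is_prime_ideal P).

Lemma P0 : P 0. Proof. by case: HP => [[]]. Qed.
Lemma PD {x y} : P x -> P y -> P (x + y). Proof. by case: HP => [[_ h _]] _ _; apply: h. Qed.
Lemma PM {a x} : P x -> P (a * x). Proof. by case: HP => [[_ _ h]] _ _; apply: h. Qed.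
Lemma PMr {a x} : P x -> P (x * a). Proof. by rewrite mulrC; apply: PM. Qed.
Lemma PN {x} : P x -> P (- x). Proof. by move=> h; rewrite -mulN1r; apply: PM. Qed.
Lemma PB {x y} : P x -> P y -> P (x - y). Proof. by move=> hx hy; apply: PD => //; apply: PN. Qed.
Lemma P1 : ~ P 1. Proof. by case: HP. Qed.
Lemma Pprime {x y} : P (x * y) -> P x \/ P y. Proof. by case: HP => _ _; apply. Qed.
Lemma Pmul_n {x y} : ~ P x -> ~ P y -> ~ P (x * y).
Proof. by move=> hx hy /Pprime []. Qed.
Lemma Peq {x y} : x = y -> P x -> P y. Proof. by move=> ->. Qed.

Definition Pb (r : R) : bool := `[< P r >].
Lemma PbP r : Pb r = true <-> P r. Proof. by split => /asboolP. Qed.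
Lemma nPbP r : ~~ Pb r <-> ~ P r.
Proof. split => [/negP h hp|h]; [by apply: h; apply/PbP | by apply/negP => /PbP]. Qed.

Record ratio := mkRatio { frac :> R * R; _ : ~~ Pb frac.2 }.
HB.instance Definition _ := [isSub for frac].
HB.instance Definition _ := [Choice of ratio by <:].

Lemma domP (x : ratio) : ~ P x.2. Proof. by case: x => f /= /nPbP. Qed.

Lemma one_ok : ~~ Pb (1 : R, 1 : R).2. Proof. by apply/nPbP; apply: P1. Qed.
Definition ratio1 := mkRatio (1, 1) one_ok.
Definition Ratio (x y : R) : ratio := insubd ratio1 (x, y).

Lemma numden_Ratio x {y} : ~ P y -> (Ratio x y).1 = x /\ (Ratio x y).2 = y.
Proof.
move=> /nPbP hy; rewrite /Ratio /insubd insubT //=.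
Qed.

Definition equivf (x y : ratio) := Pb (x.1 * y.2 - x.2 * y.1).

Lemma equivf_refl : reflexive equivf.
Proof. by move=> x; apply/PbP; apply: (Peq _ P0); ring. Qed.

Lemma equivf_sym : symmetric equivf.
Proof.
move=> x y; apply/idP/idP => /PbP h; apply/PbP; apply: (Peq _ (PN h)); ring.
Qed.

Lemma equivf_trans : transitive equivf.
Proof.
move=> y x z /PbP hxy /PbP hyz; apply/PbP.
have : P (y.2 * (x.1 * z.2 - x.2 * z.1)).
  apply: (Peq (x := z.2 * (x.1 * y.2 - x.2 * y.1) + x.2 * (y.1 * z.2 - y.2 * z.1))).
    ring.
  by apply: PD; apply: PM.
by case/Pprime => [h0|//]; case: (domP _ h0).
Qed.

Canonical equivf_equiv := EquivRel equivf equivf_refl equivf_sym equivf_trans.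

Definition type := {eq_quot equivf}.
HB.instance Definition _ : EqQuotient _ equivf type := EqQuotient.on type.
HB.instance Definition _ := Choice.on type.

Lemma eqmodPb {x y : ratio} : \pi_type x = \pi_type y <-> P (x.1 * y.2 - x.2 * y.1).
Proof.
split; first by move/eqmodP/PbP.
by move=> h; apply/eqmodP/PbP.
Qed.

Lemma reprP (x : ratio) : P ((repr (\pi_type x)).1 * x.2 - (repr (\pi_type x)).2 * x.1).
Proof. by apply/eqmodPb; rewrite reprK. Qed.

Lemma dmul (x y : ratio) : ~ P (x.2 * y.2).
Proof. by apply: Pmul_n; apply: domP. Qed.

Definition tofrac := lift_embed type (fun x : R => Ratio x 1).
Canonical tofrac_pi_morph := PiEmbed tofrac.

Definition addf (x y : ratio) : ratio := Ratio (x.1 * y.2 + y.1 * x.2) (x.2 * y.2).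
Definition add := lift_op2 type addf.

Lemma pi_add : {morph \pi : x y / addf x y >-> add x y}.
Proof.
move=> x y; unlock add; apply/eqmodPb; rewrite /addf.
have [-> ->] := numden_Ratio (x.1 * y.2 + y.1 * x.2) (dmul x y).
set x' := repr (\pi_type x); set y' := repr (\pi_type y).
have [-> ->] := numden_Ratio (x'.1 * y'.2 + y'.1 * x'.2) (dmul x' y').
have hx := reprP x; have hy := reprP y; rewrite -/x' -/y' in hx hy.
apply: (Peq (x := - (y.2 * y'.2) * (x'.1 * x.2 - x'.2 * x.1)
                  - (x.2 * x'.2) * (y'.1 * y.2 - y'.2 * y.1))); first ring.
by apply: PB; apply: PM.
Qed.
Canonical pi_add_morph := PiMorph2 pi_add.

Definition oppf (x : ratio) : ratio := Ratio (- x.1) x.2.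
Definition opp := lift_op1 type oppf.
Lemma pi_opp : {morph \pi : x / oppf x >-> opp x}.
Proof.
move=> x; unlock opp; apply/eqmodPb; rewrite /oppf.
have [-> ->] := numden_Ratio (- x.1) (domP x).
set x' := repr (\pi_type x).
have [-> ->] := numden_Ratio (- x'.1) (domP x').
have hx := reprP x; rewrite -/x' in hx.
by apply: (Peq _ hx); ring.
Qed.
Canonical pi_opp_morph := PiMorph1 pi_opp.

Definition mulf (x y : ratio) : ratio := Ratio (x.1 * y.1) (x.2 * y.2).
Definition mul := lift_op2 type mulf.

Lemma pi_mul : {morph \pi : x y / mulf x y >-> mul x y}.
Proof.
move=> x y; unlock mul; apply/eqmodPb; rewrite /mulf.
have [-> ->] := numden_Ratio (x.1 * y.1) (dmul x y).
set x' := repr (\pi_type x); set y' := repr (\pi_type y).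
have [-> ->] := numden_Ratio (x'.1 * y'.1) (dmul x' y').
have hx := reprP x; have hy := reprP y; rewrite -/x' -/y' in hx hy.
apply: (Peq (x := - (y.1 * y'.2) * (x'.1 * x.2 - x'.2 * x.1)
                  - (x.2 * x'.1) * (y'.1 * y.2 - y'.2 * y.1))); first ring.
by apply: PB; apply: PM.
Qed.
Canonical pi_mul_morph := PiMorph2 pi_mul.

Definition invf (x : ratio) : ratio := if Pb x.1 then Ratio 0 1 else Ratio x.2 x.1.
Definition inv := lift_op1 type invf.

Lemma pi_inv : {morph \pi : x / invf x >-> inv x}.
Proof.
move=> x; unlock inv; apply/eqmodPb; rewrite /invf.
set x' := repr (\pi_type x).
have hx := reprP x; rewrite -/x' in hx.
have e : P x.1 <-> P x'.1.
  split => h.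
    have : P (x'.1 * x.2).
      by apply: (Peq (x := (x'.1 * x.2 - x'.2 * x.1) + x'.2 * x.1)); [ring| apply: PD => //; apply: PM].
    by case/Pprime => [//|h0]; case: (domP _ h0).
  have : P (x'.2 * x.1).
    by apply: (Peq (x := x'.1 * x.2 - (x'.1 * x.2 - x'.2 * x.1))); [ring| apply: PB => //; apply: PMr].
  by case/Pprime => [h0|//]; case: (domP _ h0).
case: (boolP (Pb x.1)) => [/PbP h1|/nPbP h1]; case: (boolP (Pb x'.1)) => [/PbP h2|/nPbP h2].
- by apply: (Peq _ P0); ring.
- by exfalso; apply: h2; apply/e.
- by exfalso; apply: h1; apply/e.
have [-> ->] := numden_Ratio x.2 h1.
have [-> ->] := numden_Ratio x'.2 h2.
by apply: (Peq _ hx); ring.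
Qed.
Canonical pi_inv_morph := PiMorph1 pi_inv.

Lemma addA : associative add.
Proof.
elim/quotW=> x; elim/quotW=> y; elim/quotW=> z; rewrite !piE; apply/eqmodPb.
rewrite /addf.
have [-> ->] := numden_Ratio (x.1 * y.2 + y.1 * x.2) (dmul x y).
have [-> ->] := numden_Ratio (y.1 * z.2 + z.1 * y.2) (dmul y z).
have [-> ->] := numden_Ratio ((x.1 * y.2 + y.1 * x.2) * z.2 + z.1 * (x.2 * y.2))
   (Pmul_n (dmul x y) (domP z)).
have [-> ->] := numden_Ratio (x.1 * (y.2 * z.2) + (y.1 * z.2 + z.1 * y.2) * x.2)
   (Pmul_n (domP x) (dmul y z)).
by apply: (Peq _ P0); ring.
Qed.

Lemma addC : commutative add.
Proof.
elim/quotW=> x; elim/quotW=> y; rewrite !piE; apply/eqmodPb; rewrite /addf.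
have [-> ->] := numden_Ratio (x.1 * y.2 + y.1 * x.2) (dmul x y).
have [-> ->] := numden_Ratio (y.1 * x.2 + x.1 * y.2) (dmul y x).
by apply: (Peq _ P0); ring.
Qed.

Lemma add0_l : left_id (tofrac 0) add.
Proof.
elim/quotW=> x; rewrite !piE; apply/eqmodPb; rewrite /addf.
have [-> ->] := numden_Ratio 0 P1.
have [-> ->] := numden_Ratio (0 * x.2 + x.1 * 1) (Pmul_n P1 (domP x)).
by apply: (Peq _ P0); ring.
Qed.

Lemma addN_l : left_inverse (tofrac 0) opp add.
Proof.
elim/quotW=> x; rewrite !piE; apply/eqmodPb; rewrite /addf /oppf.
have [-> ->] := numden_Ratio (- x.1) (domP x).
have [-> ->] := numden_Ratio 0 P1.
have [-> ->] := numden_Ratio (- x.1 * x.2 + x.1 * x.2) (dmul x x).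
by apply: (Peq _ P0); ring.
Qed.

HB.instance Definition _ := GRing.isZmodule.Build type addA addC add0_l addN_l.

Lemma mulA : associative mul.
Proof.
elim/quotW=> x; elim/quotW=> y; elim/quotW=> z; rewrite !piE; apply/eqmodPb.
rewrite /mulf.
have [-> ->] := numden_Ratio (x.1 * y.1) (dmul x y).
have [-> ->] := numden_Ratio (y.1 * z.1) (dmul y z).
have [-> ->] := numden_Ratio (x.1 * y.1 * z.1) (Pmul_n (dmul x y) (domP z)).
have [-> ->] := numden_Ratio (x.1 * (y.1 * z.1)) (Pmul_n (domP x) (dmul y z)).
by apply: (Peq _ P0); ring.
Qed.

Lemma mulC : commutative mul.
Proof.
elim/quotW=> x; elim/quotW=> y; rewrite !piE; apply/eqmodPb; rewrite /mulf.
have [-> ->] := numden_Ratio (x.1 * y.1) (dmul x y).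
have [-> ->] := numden_Ratio (y.1 * x.1) (dmul y x).
by apply: (Peq _ P0); ring.
Qed.

Lemma mul1_l : left_id (tofrac 1) mul.
Proof.
elim/quotW=> x; rewrite !piE; apply/eqmodPb; rewrite /mulf.
have [-> ->] := numden_Ratio 1 P1.
have [-> ->] := numden_Ratio (1 * x.1) (Pmul_n P1 (domP x)).
by apply: (Peq _ P0); ring.
Qed.

Lemma mul_addl : left_distributive mul add.
Proof.
elim/quotW=> x; elim/quotW=> y; elim/quotW=> z; rewrite !piE; apply/eqmodPb.
rewrite /mulf /addf.
have [-> ->] := numden_Ratio (x.1 * y.2 + y.1 * x.2) (dmul x y).
have [-> ->] := numden_Ratio (x.1 * z.1) (dmul x z).
have [-> ->] := numden_Ratio (y.1 * z.1) (dmul y z).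
have [-> ->] := numden_Ratio ((x.1 * y.2 + y.1 * x.2) * z.1) (Pmul_n (dmul x y) (domP z)).
have [-> ->] := numden_Ratio (x.1 * z.1 * (y.2 * z.2) + y.1 * z.1 * (x.2 * z.2))
   (Pmul_n (dmul x z) (dmul y z)).
by apply: (Peq _ P0); ring.
Qed.

Lemma tofracE r : tofrac r = \pi_type (Ratio r 1).
Proof. by rewrite !piE. Qed.

Lemma nonzero1 : tofrac 1 != tofrac 0 :> type.
Proof.
apply/negP => /eqP; rewrite !tofracE => /eqmodPb.
have [-> ->] := numden_Ratio 1 P1.
have [-> ->] := numden_Ratio 0 P1.
by move=> h; apply: P1; apply: (Peq _ h); ring.
Qed.

HB.instance Definition _ :=
  GRing.Zmodule_isComNzRing.Build type mulA mulC mul1_l mul_addl nonzero1.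

Lemma mulV_l : forall a : type, a != 0 -> mul (inv a) a = 1.
Proof.
elim/quotW=> x hx.
have h1 : ~ P x.1.
  move=> h; move/eqP: hx; apply; rewrite -[0]/(tofrac 0) tofracE; apply/eqmodPb.
  have [-> ->] := numden_Ratio 0 P1.
  by apply: (Peq _ h); ring.
rewrite -[1]/(tofrac 1) tofracE -pi_inv -pi_mul.
rewrite /invf; have -> : Pb x.1 = false by apply: negbTE; apply/nPbP.
apply/eqmodPb; rewrite /mulf.
have [-> ->] := numden_Ratio x.2 h1.
have [-> ->] := numden_Ratio 1 P1.
have [-> ->] := numden_Ratio (x.2 * x.1) (Pmul_n h1 (domP x)).
by apply: (Peq _ P0); ring.
Qed.

Lemma inv0 : inv 0 = 0.
Proof.
rewrite !piE /invf.
have [-> ->] := numden_Ratio 0 P1.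
have -> : Pb 0 = true by apply/PbP; apply: P0.
by [].
Qed.

HB.instance Definition _ := GRing.ComNzRing_isField.Build type mulV_l inv0.

Lemma tofrac_is_zmod_morphism: zmod_morphism tofrac.
Proof.
move=> x y /=; rewrite !piE; apply/eqmodPb; rewrite /addf /oppf.
have [-> ->] := numden_Ratio (x - y) P1.
have [-> ->] := numden_Ratio y P1.
have [-> ->] := numden_Ratio (- y) P1.
have [-> ->] := numden_Ratio x P1.
have [-> ->] := numden_Ratio (x * 1 + - y * 1) (Pmul_n P1 P1).
by apply: (Peq _ P0); ring.
Qed.
HB.instance Definition _ := GRing.isZmodMorphism.Build R type tofrac
  tofrac_is_zmod_morphism.

Lemma tofrac_is_monoid_morphism: monoid_morphism tofrac.
Proof.
split=> [//|x y]; rewrite !piE; apply/eqmodPb; rewrite /mulf.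
have [-> ->] := numden_Ratio (x * y) P1.
have [-> ->] := numden_Ratio y P1.
have [-> ->] := numden_Ratio x P1.
have [-> ->] := numden_Ratio (x * y) (Pmul_n P1 P1).
by apply: (Peq _ P0); ring.
Qed.
HB.instance Definition _ := GRing.isMonoidMorphism.Build R type tofrac
  tofrac_is_monoid_morphism.

Lemma tofrac_eq0 r : tofrac r = 0 <-> P r.
Proof.
rewrite !piE; split.
  move/eqmodPb.
  have [-> ->] := numden_Ratio r P1.
  have [-> ->] := numden_Ratio 0 P1.
  by apply: Peq; ring.
move=> h; apply/eqmodPb.
have [-> ->] := numden_Ratio r P1.
have [-> ->] := numden_Ratio 0 P1.
by apply: (Peq _ h); ring.
Qed.


Section Lift.
Variables (F : fieldType) (h : {rmorphism R -> F}) (hker : forall r, h r = 0 <-> P r).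

Definition lift (hk : forall r, h r = 0 <-> P r) (z : type) : F :=
  h (repr z).1 / h (repr z).2.

Lemma hnz (x : ratio) : h x.2 != 0.
Proof. by apply/eqP => /hker; apply: domP. Qed.

Lemma liftE (x : ratio) : lift hker (\pi_type x) = h x.1 / h x.2.
Proof.
rewrite /lift; set x' := repr (\pi_type x).
have hx := reprP x; rewrite -/x' in hx.
move/hker: hx; rewrite rmorphB !rmorphM => /eqP; rewrite subr_eq0 => /eqP e.
apply/eqP; rewrite eqr_div ?hnz //; apply/eqP; rewrite e; apply: mulrC.
Qed.

Lemma lift_is_zmod_morphism : zmod_morphism (lift hker).
Proof.
elim/quotW=> x; elim/quotW=> y.
have -> : \pi_type x - \pi_type y = \pi_type (addf x (oppf y)) by rewrite pi_add pi_opp.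
rewrite !liftE /addf /oppf.
have [-> ->] := numden_Ratio (- y.1) (domP y).
have [-> ->] := numden_Ratio (x.1 * y.2 + - y.1 * x.2) (dmul x y).
have hx := hnz x; have hy := hnz y.
rewrite rmorphD !rmorphM rmorphN.
by field; rewrite hx hy.
Qed.
HB.instance Definition _ := GRing.isZmodMorphism.Build type F (lift hker)
  lift_is_zmod_morphism.

Lemma lift_is_monoid_morphism : monoid_morphism (lift hker).
Proof.
split.
  rewrite -[1]/(tofrac 1) tofracE liftE.
  have [-> ->] := numden_Ratio 1 P1.
  by rewrite rmorph1 divr1.
elim/quotW=> x; elim/quotW=> y.
have -> : \pi_type x * \pi_type y = \pi_type (mulf x y) by rewrite pi_mul.
rewrite !liftE /mulf.
have [-> ->] := numden_Ratio (x.1 * y.1) (dmul x y).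
have hx := hnz x; have hy := hnz y.
rewrite !rmorphM.
by field; rewrite hx hy.
Qed.
HB.instance Definition _ := GRing.isMonoidMorphism.Build type F (lift hker)
  lift_is_monoid_morphism.

Lemma lift_tofrac r : lift hker (tofrac r) = h r.
Proof.
rewrite tofracE liftE.
have [-> ->] := numden_Ratio r P1.
by rewrite rmorph1 divr1.
Qed.

End Lift.
End FracP.
End FracP.
HB.export FracP.

Lemma spec_ext (T : comPzRingType) (p q : Spec T) :
  (forall a, sval p a <-> sval q a) -> p = q.
Proof.
move=> h; apply: eq_sig_hprop; first by move=> ? ? ?; apply: Prop_irrelevance.
by apply: funext => a; apply: propext.
Qed.

Lemma pinv_uniq (B : comPzRingType) (a b c : B) :
  a * b ^+ 2 - b = 0 /\ a ^+ 2 * b - a = 0 ->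
  a * c ^+ 2 - c = 0 /\ a ^+ 2 * c - a = 0 -> b = c.
Proof.
move=> [/subr0_eq Eb /subr0_eq Eab] [/subr0_eq Ec /subr0_eq Eac].
have e1 : a * b = (a * b) * (a * c) by rewrite -{1}Eac; ring.
have e2 : a * c = (a * b) * (a * c) by rewrite -{1}Eab; ring.
have e : a * b = a * c by rewrite e1 -e2.
rewrite -Eb -Ec.
transitivity (b * (a * c)); first by rewrite -e; ring.
transitivity (c * (a * b)); first ring.
by rewrite e; ring.
Qed.

Lemma field_pinv (F : fieldType) (a : F) :
  a * a^-1 ^+ 2 - a^-1 = 0 /\ a ^+ 2 * a^-1 - a = 0.
Proof.
have [->|ha] := eqVneq a 0; first by rewrite invr0; split; ring.
by split; field.
Qed.

Lemma exists_prime (R : comPzRingType) (r : R) :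
  (forall n, r ^+ n != 0) -> exists p : Spec R, ~ sval p r.
Proof.
move=> rn.
pose Pset : set (set R) := fun I => (forall n, ~ I (r ^+ n)) /\
  (forall a b, I a -> I b -> I (a + b)) /\ (forall c a, I a -> I (c * a)).
have [M [[Mr [MD MM]] Mmax]] : exists M, Pset M /\ forall B, (M `<` B)%classic -> ~ Pset B.
  apply: Zorn_bigcup => F FP Ftot; split; [|split].
  - by move=> n [X FX Xr]; exact: (FP X FX).1 n Xr.
  - move=> a b [X FX Xa] [Y FY Yb].
    case: (Ftot X Y FX FY) => XY.
      by exists Y => //; apply: (FP Y FY).2.1 => //; apply: XY.
    by exists X => //; apply: (FP X FX).2.1 => //; apply: XY.
  - by move=> c a [X FX Xa]; exists X => //; apply: (FP X FX).2.2.
pose J a : set R := fun z => exists m c, (M m \/ m = 0) /\ z = m + c * a.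
have PJ a : (forall z w, J a z -> J a w -> J a (z + w)) /\ (forall c z, J a z -> J a (c * z)).
  split.
    move=> z w [m1 [c1 [h1 ->]]] [m2 [c2 [h2 ->]]].
    exists (m1 + m2), (c1 + c2); split; last by ring.
    case: h1 => [h1|->]; case: h2 => [h2|->]; rewrite ?addr0 ?add0r; auto.
  move=> c z [m [d [hm ->]]]; exists (c * m), (c * d); split; last by ring.
  by case: hm => [hm|->]; [left; apply: (MM)| right; rewrite mulr0].
have Jmax a : ~ M a -> exists n, J a (r ^+ n).
  move=> Ma; apply: Classical_Prop.NNPP => hn.
  apply: (Mmax (J a)).
    split.
      by move=> z Mz; exists z, 0; split; [left|ring].
    move=> sub; apply: Ma; apply: sub; exists 0, 1; split; [by right|ring].
  split; last exact: PJ.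
  by move=> n Jn; apply: hn; exists n.
have M0 : M 0.
  apply: Classical_Prop.NNPP => M0.
  have [n [m [c [hm e]]]] := Jmax 0 M0.
  rewrite mulr0 addr0 in e.
  case: hm => [hm|e0]; first by apply: (Mr n); rewrite e.
  by move/eqP: (rn n); apply; rewrite e e0.
have Mor m : M m \/ m = 0 -> M m by case => // ->.
have Mp : is_prime_ideal M.
  split; first split => //.
  - by move=> h; apply: (Mr 0); rewrite expr0.
  move=> a b Mab; apply: Classical_Prop.NNPP => hab.
  have Ma : ~ M a by move=> h; apply: hab; left.
  have Mb : ~ M b by move=> h; apply: hab; right.
  have [n [m1 [c1 [h1 e1]]]] := Jmax a Ma.
  have [k [m2 [c2 [h2 e2]]]] := Jmax b Mb.
  apply: (Mr (n + k)%N).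
  have -> : r ^+ (n + k) = m1 * m2 + (m1 * c2) * b + (c1 * m2) * a + (c1 * c2) * (a * b).
    by rewrite exprD e1 e2; ring.
  move/Mor: h1 => h1; move/Mor: h2 => h2.
  apply: (MD); [apply: (MD); [apply: (MD)|]|].
  - by rewrite mulrC; apply: (MM).
  - by rewrite -mulrA mulrC; apply: (MM).
  - by rewrite -mulrA; apply: (MM); rewrite mulrC; apply: (MM).
  - by apply: (MM).
by exists (exist _ M Mp) => /= h; apply: (Mr 1); rewrite expr1.
Qed.

Section Main.
Variables (R : comPzRingType) (S : R -> Prop) (A : comPzRingType)
  (eta : {rmorphism R -> A}) (x : R -> A) (H : is_pinv_localization S eta x).

Lemma morph_pinv (B : comPzRingType) (g : {rmorphism A -> B}) s : S s ->
  g (eta s) * g (x s) ^+ 2 - g (x s) = 0 /\ g (eta s) ^+ 2 * g (x s) - g (eta s) = 0.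
Proof.
move=> Ss; have [e1 e2] := H.1 s Ss; split.
  by rewrite -[X in _ * X]rmorphXn -rmorphM -rmorphB e1 rmorph0.
by rewrite -[X in X * _]rmorphXn -rmorphM -rmorphB e2 rmorph0.
Qed.

Lemma epi (B : comPzRingType) (g h : {rmorphism A -> B}) :
  (forall r, g (eta r) = h (eta r)) -> forall a, g a = h a.
Proof.
move=> gh a.
pose f : {rmorphism R -> B} := g \o eta.
pose y := fun s => g (x s).
have hy : forall s, S s -> f s * y s ^+ 2 - y s = 0 /\ f s ^+ 2 * y s - f s = 0.
  by move=> s Ss; apply: morph_pinv.
have [g0 [_ uniq]] := H.2 B f y hy.
have Eg : g a = g0 a by apply: uniq => [r|s Ss].
have Eh : h a = g0 a.
  apply: uniq => [r|s Ss]; first by rewrite /f /= gh.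
  rewrite /y; apply: (@pinv_uniq _ (h (eta s))); first exact: morph_pinv.
  by rewrite -gh; apply: morph_pinv.
by rewrite Eg Eh.
Qed.

Local Notation K p := (FracP.type R (sval p) (proj2_sig p)).
Definition phi (p : Spec R) : {rmorphism R -> K p} := FracP.tofrac R (sval p) (proj2_sig p).

Lemma psi_ex (p : Spec R) : exists psi : {rmorphism A -> K p}, forall r, psi (eta r) = phi p r.
Proof.
have hy : forall s, S s -> phi p s * (phi p s)^-1 ^+ 2 - (phi p s)^-1 = 0 /\
            phi p s ^+ 2 * (phi p s)^-1 - phi p s = 0.
  by move=> s _; apply: field_pinv.
by have [g [[hg _] _]] := H.2 (K p) (phi p) (fun s => (phi p s)^-1) hy; exists g.
Qed.

Lemma kerpsi (p : Spec R) (psi : {rmorphism A -> K p})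
  (hpsi : forall r, psi (eta r) = phi p r) (q : Spec A) :
  comap eta q = p -> forall a, sval q a <-> psi a = 0.
Proof.
move=> e a.
pose Kq := FracP.type A (sval q) (proj2_sig q).
pose pi : {rmorphism A -> Kq} := FracP.tofrac A (sval q) (proj2_sig q).
pose h : {rmorphism R -> Kq} := pi \o eta.
have hker : forall r, h r = 0 <-> sval p r.
  move=> r; rewrite /h /= FracP.tofrac_eq0 -e //.
pose j : {rmorphism K p -> Kq} := FracP.lift R (sval p) (proj2_sig p) Kq h hker.
have E : forall b, j (psi b) = pi b.
  apply: (@epi Kq (j \o psi : {rmorphism A -> Kq}) pi) => r /=.
  by rewrite hpsi /phi /j FracP.lift_tofrac.
rewrite -(FracP.tofrac_eq0 A (sval q) (proj2_sig q) a) -/pi -E.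
split => [/eqP|->]; last by rewrite rmorph0.
by rewrite fmorph_eq0 => /eqP.
Qed.

Lemma surj (p : Spec R) : exists q : Spec A, comap eta q = p.
Proof.
have [psi hpsi] := psi_ex p.
have qp : is_prime_ideal (fun a => psi a = 0).
  split; first split.
  - exact: rmorph0.
  - by move=> a b ha hb; rewrite rmorphD ha hb addr0.
  - by move=> a b hb; rewrite rmorphM hb mulr0.
  - by rewrite rmorph1; apply/eqP; apply: oner_neq0.
  - by move=> a b; rewrite rmorphM => /eqP; rewrite mulf_eq0 => /orP [] /eqP; auto.
exists (exist _ _ qp); apply: spec_ext => r /=.
by rewrite hpsi /phi FracP.tofrac_eq0.
Qed.

Lemma inj : injective (comap eta).
Proof.
move=> q1 q2 e.
have [psi hpsi] := psi_ex (comap eta q1).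
apply: spec_ext => a.
by rewrite (kerpsi _ _ hpsi q1) // (kerpsi _ _ hpsi q2).
Qed.

End Main.

Definition prI (T : comPzRingType) (g : T) : T -> Prop := fun a => exists c, a = c * g.
Arguments prI {T}.

Lemma prI_ideal (T : comPzRingType) (g : T) : is_ideal (prI g).
Proof.
split.
- by exists 0; rewrite mul0r.
- by move=> a b [c ->] [d ->]; exists (c + d); rewrite mulrDl.
- by move=> a b [c ->]; exists (a * c); rewrite mulrA.
Qed.

Lemma prI_fg (T : comPzRingType) (g : T) : finitely_generated (prI g).
Proof.
exists [:: g] => a; rewrite /fg_ideal /=; split.
  by move=> [c ->]; exists [:: c]; rewrite big_ord1.
by move=> [c [_ ->]]; exists c`_0; rewrite big_ord1.
Qed.

Lemma prI_V (T : comPzRingType) (g : T) (q : Spec T) : V (prI g) q <-> sval q g.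
Proof.
split; first by move=> h; apply: h; exists 1; rewrite mul1r.
case: q => q [[q0 qD qM] q1 qp] /= hg a [c ->]; exact: qM.
Qed.

Theorem proposition3p5 (R : comPzRingType) (S : R -> Prop)
  (A : comPzRingType) (eta : {rmorphism R -> A}) (x : R -> A) :
  is_pinv_localization S eta x ->
  (forall (B : comPzRingType) (g h : {rmorphism A -> B}),
         (forall r, g (eta r) = h (eta r)) -> forall a, g a = h a) /\
      bijective (comap eta) /\
      (forall s, S s ->
         let Z := fun q : Spec A => Vf s (comap eta q) in
         [/\ zariski_open Z, zariski_closed Z, flat_open Z & flat_closed Z]) /\
      ((0 : A) != 1 <-> (0 : R) != 1) /\
    (forall r, eta r = 0 -> exists n : nat, r ^+ n = 0).
Proof.
move=> H.
have Hsurj := surj R S A eta x H; have Hinj := inj R S A eta x H.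
split; first exact: epi R S A eta x H.
split.
  pose g p := proj1_sig (cid (Hsurj p)).
  have gK p : comap eta (g p) = p by rewrite /g; case: cid.
  exists g => [q|p]; last exact: gK.
  by apply: Hinj; rewrite gK.
split.
  move=> s Ss Z.
  have [e1 e2] := H.1 s Ss.
  pose e := eta s * x s.
  have ee : e * (1 - e) = 0.
    have -> : e * (1 - e) = - (x s * (eta s ^+ 2 * x s - eta s)) by rewrite /e; ring.
    by rewrite e2 mulr0 oppr0.
  have es : eta s * e = eta s.
    by apply/eqP; rewrite -subr_eq0; rewrite -e2 /e; apply/eqP; ring.
  have F1 (q : Spec A) : sval q (eta s) -> ~ sval q (1 - e).
    case: q => q [[q0 qD qM] q1 qp]; rewrite /= => hs he.
    apply: q1; have -> : (1 : A) = (1 - e) + x s * eta s by rewrite /e; ring.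
    by apply: qD => //; apply: qM.
  have F2 (q : Spec A) : ~ sval q (eta s) -> sval q (1 - e).
    case: q => q [[q0 qD qM] q1 qp]; rewrite /= => hs.
    have : q (e * (1 - e)) by rewrite ee.
    case/qp => // he; exfalso; apply: hs; rewrite -es; exact: qM.
  have ZV (q : Spec A) : Z q <-> V (prI (eta s)) q by rewrite prI_V.
  have ZV' (q : Spec A) : ~ Z q <-> V (prI (1 - e)) q.
    rewrite prI_V; split; first exact: F2.
    by move=> h hz; exact: (F1 q hz h).
  split.
  - by exists (prI (1 - e)); split; [exact: prI_ideal| exact: ZV'].
  - by exists (prI (eta s)); split; [exact: prI_ideal| exact: ZV].
  - move=> q hq; exists (prI (eta s)); split; [exact: prI_ideal|exact: prI_fg| |].
      by apply/ZV.
    by move=> q' /ZV.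
  - move=> q hq; exists (prI (1 - e)); split; [exact: prI_ideal|exact: prI_fg| |].
      by apply/ZV'.
    by move=> q' /ZV'.
split.
  split.
    apply: contraNneq => e.
    by rewrite -(rmorph0 eta) -(rmorph1 eta) e.
  move=> hR.
  have [p _] : exists p : Spec R, ~ sval p 1.
    by apply: exists_prime => n; rewrite expr1n; rewrite eq_sym.
  have [[q [[q0 qD qM] q1 qp]] _] := Hsurj p.
  by apply/eqP => e; apply: q1; rewrite -e.
move=> r er; apply: Classical_Prop.NNPP => hn.
have [p hp] : exists p : Spec R, ~ sval p r.
  by apply: exists_prime => n; apply/eqP => h; apply: hn; exists n.
have [q hq] := Hsurj p.
apply: hp; rewrite -hq /= er.
by have [[]] := proj2_sig q.
Qed.
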